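(* Let $\beta>0$, $\tilde\lambda\in(0,1]$, $\mathcal{L}\ge 0$, $x\ge 0$, $y\le 0$, $z\ge 0$, $r>0$. For $\Delta>y$ let $p^D(\Delta)=\frac{x}{\Delta-y}$. Suppose the set $F$ of $\Delta>y$ with $\beta(\mathcal{L}+\Delta)\le\tilde\lambda\big(z+\Delta p^D(\Delta)\big)$ is nonempty, and write $F=[\Delta_{\min},\Delta_{\max}]\cap(y,\infty)$, where $\Delta_{\min}\le\Delta_{\max}$ are the real roots of $-\beta \Delta^2 + \Delta( \tilde \lambda (z+x) - \beta(\mathcal{L} - y)) - \tilde\lambda zy + \beta\mathcal{L} y$. Consider the problem $$\max_{\Delta\in F}\; r\Big(z+\Delta\frac{x}{\Delta-y}\Big)-\mathcal{L}-\Delta ,$$ equivalently maximizing $f(\Delta)=r\Delta\frac{x}{\Delta-y}-\Delta$ over $F$. Let $\Delta^*=y+\sqrt{-yrx}$. Then the solution of this problem is $\Delta^*$ if $\Delta^*\in F$; it is $\Delta_{\min}$ if $\Delta^*<\Delta_{\min}$; and it is $\Delta_{\max}$ if $\Delta^*>\Delta_{\max}$.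
   Context: Single period $t$ of a stablecoin market model. A speculator owes $\mathcal{L}=\mathcal{L}_{t-1}$ stablecoins and holds Ether worth $z$ dollars; $x\ge0$ is new dollar stablecoin demand and $y\le0$ (with $|y|$ the free stablecoin supply). The speculator chooses a change $\Delta$ in stablecoin supply; for $\Delta>y$ the market clears at price $p^D(\Delta)=x/(\Delta-y)$. The speculator maximizes expected equity $r(z+\Delta p^D(\Delta))-(\mathcal{L}+\Delta)$, where $r$ is its expected multiplicative Ether return, subject to the leverage constraint $\beta(\mathcal{L}+\Delta)\le\tilde\lambda(z+\Delta p^D(\Delta))$ with liquidation threshold $\beta$ and leverage bound $\tilde\lambda$. *)

(* Defs.v *)
From Stdlib Require Import Reals Lra.
Open Scope R_scope.

(* market-clearing price p^D(Delta) = x / (Delta - y), meaningful for Delta > y *)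
Definition pD (x y Delta : R) : R := x / (Delta - y).

Definition feasible (beta lam L x y z Delta : R) : Prop :=
  y < Delta /\ beta * (L + Delta) <= lam * (z + Delta * pD x y Delta).

Definition objective (r L x y z Delta : R) : R :=
  r * (z + Delta * pD x y Delta) - L - Delta.

Definition quad (beta lam L x y z Delta : R) : R :=
  - beta * Delta ^ 2 + Delta * (lam * (z + x) - beta * (L - y))
  - lam * z * y + beta * L * y.

Definition is_solution (beta lam L x y z r Delta : R) : Prop :=
  feasible beta lam L x y z Delta /\
  forall D, feasible beta lam L x y z D ->
    objective r L x y z D <= objective r L x y z Delta.

Definition is_unique_solution (beta lam L x y z r Delta : R) : Prop :=
  is_solution beta lam L x y z r Delta /\
  forall D, is_solution beta lam L x y z r D -> D = Delta.

(* Main.v *)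
Require Import Defs.
From Stdlib Require Import Reals Lra.
Open Scope R_scope.

Lemma quad_fact (beta lam L x y z Dmin Dmax : R) (hbeta : 0 < beta)
  (hroots : forall D, quad beta lam L x y z D = 0 <-> (D = Dmin \/ D = Dmax)) :
  forall D, quad beta lam L x y z D = - beta * (D - Dmin) * (D - Dmax).
Proof.
  set (b := lam * (z + x) - beta * (L - y)).
  set (Dp := b / beta - Dmin).
  assert (Hq0 : quad beta lam L x y z Dmin = 0) by (apply hroots; auto).
  assert (Hf : forall D, quad beta lam L x y z D = - beta * (D - Dmin) * (D - Dp)).
  { intro D. assert (E: quad beta lam L x y z D = quad beta lam L x y z D - quad beta lam L x y z Dmin) by lra.
    rewrite E. unfold quad, Dp, b. field. lra. }
  assert (HDp : Dp = Dmin \/ Dp = Dmax).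
  { apply hroots. rewrite Hf. ring. }
  assert (Dp = Dmax).
  { destruct HDp as [H|H]; auto.
    assert (Hm : quad beta lam L x y z Dmax = 0) by (apply hroots; auto).
    rewrite Hf, H in Hm.
    assert ((Dmax - Dmin) * (Dmax - Dmin) = 0) by nra.
    apply Rmult_integral in H0. lra. }
  intro D. rewrite Hf, H. ring.
Qed.

Lemma feas_iff (beta lam L x y z D : R) :
  feasible beta lam L x y z D <-> (y < D /\ 0 <= quad beta lam L x y z D).
Proof.
  unfold feasible, pD.
  split; intros [H1 H2]; split; auto.
  - assert (E : quad beta lam L x y z D =
      (lam * (z + D * (x / (D - y))) - beta * (L + D)) * (D - y)).
    { unfold quad. field. lra. }
    rewrite E. apply Rmult_le_pos; lra.
  - assert (E : lam * (z + D * (x / (D - y))) - beta * (L + D) =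
      quad beta lam L x y z D / (D - y)).
    { unfold quad. field. lra. }
    assert (0 <= quad beta lam L x y z D / (D - y)).
    { unfold Rdiv. apply Rmult_le_pos; auto. left. apply Rinv_0_lt_compat. lra. }
    lra.
Qed.

Lemma obj_eq (r L x y z D : R) : y < D ->
  objective r L x y z D = r * z + r * x - L - y - ((- y * r * x) / (D - y) + (D - y)).
Proof. intro H. unfold objective, pD. field. lra. Qed.

Lemma hdiff (k u v : R) : 0 < u -> 0 < v ->
  (k / v + v) - (k / u + u) = (v - u) * (u * v - k) / (u * v).
Proof. intros. field. lra. Qed.

Theorem proposition3p2 (beta lam L x y z r Dmin Dmax : R)
  (hbeta : 0 < beta) (hlam0 : 0 < lam) (hlam1 : lam <= 1)
  (hL : 0 <= L) (hx : 0 <= x) (hy : y <= 0) (hz : 0 <= z) (hr : 0 < r)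
  (hF : exists D, feasible beta lam L x y z D)
  (hroots : forall D, quad beta lam L x y z D = 0 <-> (D = Dmin \/ D = Dmax))
  (hle : Dmin <= Dmax) :
  let Dstar := y + sqrt (- y * r * x) in
  (feasible beta lam L x y z Dstar -> is_unique_solution beta lam L x y z r Dstar) /\
  (Dstar < Dmin -> is_unique_solution beta lam L x y z r Dmin) /\
  (Dmax < Dstar -> is_unique_solution beta lam L x y z r Dmax).
Proof.
  intro Dstar.
  pose proof (quad_fact _ _ _ _ _ _ _ _ hbeta hroots) as Hq.
  set (k := - y * r * x).
  assert (hk : 0 <= k) by (unfold k; assert (0 <= -y) by lra;
    assert (0 <= -y * r) by nra; nra).
  pose proof (sqrt_pos k) as hs0.
  pose proof (sqrt_sqrt k hk) as hss.
  set (s := sqrt k) in hs0, hss.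
  assert (HF : forall D, feasible beta lam L x y z D <-> (y < D /\ Dmin <= D <= Dmax)).
  { intro D. rewrite feas_iff, Hq. split; intros [H1 H2]; split; auto.
    - destruct (Rle_dec Dmin D), (Rle_dec D Dmax); try lra.
      + assert (0 < (D - Dmin) * (D - Dmax)) by (apply Rmult_lt_0_compat; lra).
        assert (0 < beta * ((D - Dmin) * (D - Dmax))) by (apply Rmult_lt_0_compat; lra).
        nra.
      + assert (0 < (Dmin - D) * (Dmax - D)) by (apply Rmult_lt_0_compat; lra).
        assert (0 < beta * ((Dmin - D) * (Dmax - D))) by (apply Rmult_lt_0_compat; lra).
        nra.
    - replace (- beta * (D - Dmin) * (D - Dmax)) with (beta * ((D - Dmin) * (Dmax - D))) by ring.
      apply Rmult_le_pos; try lra. apply Rmult_le_pos; lra. }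
  assert (Gen : forall D0, y < D0 ->
     (forall D, y < D -> Dmin <= D <= Dmax -> D <> D0 ->
        (D - y - (D0 - y)) * ((D0 - y) * (D - y) - k) > 0) ->
     feasible beta lam L x y z D0 -> is_unique_solution beta lam L x y z r D0).
  { intros D0 hD0 Hc Hf0.
    assert (Hstrict : forall D, feasible beta lam L x y z D -> D <> D0 ->
        objective r L x y z D < objective r L x y z D0).
    { intros D HfD Hne. pose proof HfD as HfDp. apply HF in HfDp as [hyD HD].
      rewrite (obj_eq _ _ _ _ _ _ hyD), (obj_eq _ _ _ _ _ _ hD0). fold k.
      pose proof (hdiff k (D0 - y) (D - y) ltac:(lra) ltac:(lra)) as E.
      pose proof (Hc D hyD HD Hne).
      assert (0 < (D - y - (D0 - y)) * ((D0 - y) * (D - y) - k) / ((D0 - y) * (D - y))).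
      { unfold Rdiv. apply Rmult_lt_0_compat; auto. apply Rinv_0_lt_compat.
        apply Rmult_lt_0_compat; lra. }
      lra. }
    split.
    - split; auto. intros D HD. destruct (Req_dec D D0) as [->|Hn]; [lra|].
      left. apply Hstrict; auto.
    - intros D [HfD Hopt]. destruct (Req_dec D D0) as [->|Hn]; auto.
      specialize (Hopt D0 Hf0). specialize (Hstrict D HfD Hn). lra. }
  split; [|split].
  - intro Hf. pose proof Hf as Hf'. apply HF in Hf' as [hy1 _].
    unfold Dstar in hy1. fold k s in hy1.
    apply Gen; auto. intros D hyD HD Hne.
    unfold Dstar. fold k s.
    replace (D - y - (y + s - y)) with (D - y - s) by ring.
    replace ((y + s - y) * (D - y) - k) with (s * (D - y - s)) by (rewrite <- hss; ring).
    assert (D - y - s <> 0) by (intro; apply Hne; unfold Dstar; fold k s; lra).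
    replace ((D - y - s) * (s * (D - y - s))) with (s * ((D - y - s) * (D - y - s))) by ring.
    apply Rmult_lt_0_compat; [lra|]. nra.
  - intro Hlt. unfold Dstar in Hlt. fold k s in Hlt.
    apply Gen; try lra.
    + intros D hyD HD Hne.
      assert (Dmin < D) by lra.
      apply Rmult_lt_0_compat; [lra|]. rewrite <- hss.
      assert (s * s <= s * (Dmin - y)) by (apply Rmult_le_compat_l; lra).
      assert (s * (Dmin - y) < (Dmin - y) * (D - y)) by (rewrite (Rmult_comm s); apply Rmult_lt_compat_l; lra).
      lra.
    + apply HF. lra.
  - intro Hlt. unfold Dstar in Hlt. fold k s in Hlt.
    destruct hF as [D1 HD1]. apply HF in HD1.
    apply Gen; try lra.
    + intros D hyD HD Hne.
      assert (D < Dmax) by lra.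
      replace ((D - y - (Dmax - y)) * ((Dmax - y) * (D - y) - k))
        with ((Dmax - D) * (k - (Dmax - y) * (D - y))) by ring.
      apply Rmult_lt_0_compat; [lra|]. rewrite <- hss.
      assert ((Dmax - y) * (D - y) < (Dmax - y) * s) by (apply Rmult_lt_compat_l; lra).
      assert ((Dmax - y) * s <= s * s) by (rewrite (Rmult_comm _ s); apply Rmult_le_compat_l; lra).
      lra.
    + apply HF. lra.
Qed.
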